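(* If $\Gamma;\Delta\vdash t:\rho$ in $\lambda\mu\mathrm{T}$, then $t\in\mathrm{SN}_A$, i.e. there is no infinite $\to_A$-reduction sequence starting from $t$.
   Context: The calculus $\lambda\mu\mathrm{T}$. Types: $\rho,\sigma,\tau ::= \mathbb{N} \mid \sigma\to\tau$. Over infinite sets of $\lambda$-variables $x,y,\dots$ and $\mu$-variables $\alpha,\beta,\gamma,\dots$, terms and commands are mutually defined by $t,r,s ::= x \mid \lambda x{:}\rho.r \mid t\,s \mid \mu\alpha{:}\rho.c \mid 0 \mid \mathsf{S}\,t \mid \mathsf{nrec}_\rho\ r\ s\ t$ and $c ::= [\alpha]t$ (type annotations often omitted). Terms are considered modulo renaming of bound variables; $t[x:=r]$ is capture-avoiding substitution. Numerals: $\underline{n} := \mathsf{S}^n 0$. Contexts: $E ::= \Box \mid E\,t \mid \mathsf{S}\,E \mid \mathsf{nrec}\ r\ s\ E$; $E[u]$ is the result of filling the hole with $u$. Structural substitution $t[\alpha:=\beta E]$ is defined homomorphically on all constructs (capture-avoiding for both kinds of variables) except $([\alpha]u)[\alpha:=\beta E] := [\beta]E[u[\alpha:=\beta E]]$ (and $([\gamma]u)[\alpha:=\beta E]:=[\gamma](u[\alpha:=\beta E])$ for $\gamma\neq\alpha$). Typing judgments $\Gamma;\Delta\vdash t:\rho$ and $\Gamma;\Delta\vdash c$ are generated by: (var) $x:\rho\in\Gamma \Rightarrow \Gamma;\Delta\vdash x:\rho$; (lambda) $\Gamma,x:\sigma;\Delta\vdash t:\tau \Rightarrow \Gamma;\Delta\vdash\lambda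 x{:}\sigma.t:\sigma\to\tau$; (app) $\Gamma;\Delta\vdash t:\sigma\to\tau$, $\Gamma;\Delta\vdash s:\sigma$ $\Rightarrow \Gamma;\Delta\vdash ts:\tau$; (zero) $\Gamma;\Delta\vdash 0:\mathbb{N}$; (suc) $\Gamma;\Delta\vdash t:\mathbb{N}\Rightarrow\Gamma;\Delta\vdash \mathsf{S}\,t:\mathbb{N}$; (nrec) $\Gamma;\Delta\vdash r:\rho$, $\Gamma;\Delta\vdash s:\mathbb{N}\to\rho\to\rho$, $\Gamma;\Delta\vdash t:\mathbb{N}$ $\Rightarrow \Gamma;\Delta\vdash\mathsf{nrec}_\rho\ r\ s\ t:\rho$; (activate) $\Gamma;\Delta,\alpha:\rho\vdash c\Rightarrow\Gamma;\Delta\vdash\mu\alpha{:}\rho.c:\rho$; (passivate) $\Gamma;\Delta\vdash t:\rho$, $\alpha:\rho\in\Delta$ $\Rightarrow \Gamma;\Delta\vdash[\alpha]t$. $\to_A$ is the compatible closure (on terms and commands) of the rules: $(\lambda x.t)r\to t[x:=r]$; $\mathsf{S}(\mu\alpha.c)\to\mu\alpha.c[\alpha:=\alpha(\mathsf{S}\,\Box)]$; $(\mu\alpha.c)s\to\mu\alpha.c[\alpha:=\alpha(\Box\,s)]$; $\mathsf{nrec}\ r\ s\ 0\to r$; $\mathsf{nrec}\ r\ s\ (\mathsf{S}\,\underline{n})\to s\ \underline{n}\ (\mathsf{nrec}\ r\ s\ \underline{n})$; $\mathsf{nrec}\ r\ s\ (\mu\alpha.c)\to\mu\alpha.c[\alpha:=\alpha(\mathsf{nrec}\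 r\ s\ \Box)]$. $\mathrm{SN}_A$ is the set of terms inductively defined by: $t\in\mathrm{SN}_A$ whenever every $t'$ with $t\to_A t'$ is in $\mathrm{SN}_A$. *)

(* Defs.v *)
(* The calculus lambda-mu-T with de Bruijn indices.
   Two independent de Bruijn index spaces: lambda-variables and mu-variables. *)
From Stdlib Require Import Arith List.
Import ListNotations.

Inductive ty : Type :=
| TNat : ty
| TArr : ty -> ty -> ty.

(* A command [beta]t only occurs as the body of a mu-abstraction,
   so  mu alpha:rho. [beta] t  is represented as  Mu rho beta t,
   where the mu-variable 0 inside (beta and t) is the bound alpha. *)
Inductive tm : Type :=
| Var : nat -> tm
| Lam : ty -> tm -> tm
| App : tm -> tm -> tm
| Mu  : ty -> nat -> tm -> tm
| Zero : tm
| Suc : tm -> tm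
| Nrec : ty -> tm -> tm -> tm -> tm.

Fixpoint lift_l (k : nat) (t : tm) : tm :=
  match t with
  | Var n => Var (if n <? k then n else S n)
  | Lam r b => Lam r (lift_l (S k) b)
  | App a b => App (lift_l k a) (lift_l k b)
  | Mu r be b => Mu r be (lift_l k b)
  | Zero => Zero
  | Suc a => Suc (lift_l k a)
  | Nrec r a b c => Nrec r (lift_l k a) (lift_l k b) (lift_l k c)
  end.

Fixpoint lift_m (k : nat) (t : tm) : tm :=
  match t with
  | Var n => Var n
  | Lam r b => Lam r (lift_m k b)
  | App a b => App (lift_m k a) (lift_m k b)
  | Mu r be b => Mu r (if be <? S k then be else S be) (lift_m (S k) b)
  | Zero => Zero
  | Suc a => Suc (lift_m k a)
  | Nrec r a b c => Nrec r (lift_m k a) (lift_m k b) (lift_m k c)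
  end.

Fixpoint subst_l (k : nat) (u : tm) (t : tm) : tm :=
  match t with
  | Var n => if n <? k then Var n else if n =? k then u else Var (pred n)
  | Lam r b => Lam r (subst_l (S k) (lift_l 0 u) b)
  | App a b => App (subst_l k u a) (subst_l k u b)
  | Mu r be b => Mu r be (subst_l k (lift_m 0 u) b)
  | Zero => Zero
  | Suc a => Suc (subst_l k u a)
  | Nrec r a b c => Nrec r (subst_l k u a) (subst_l k u b) (subst_l k u c)
  end.

Inductive ectx : Type :=
| Hole : ectx
| EApp : ectx -> tm -> ectx
| ESuc : ectx -> ectx
| ENrec : ty -> tm -> tm -> ectx -> ectx.

Fixpoint fill (E : ectx) (u : tm) : tm :=
  match E with
  | Hole => u
  | EApp E' t => App (fill E' u) t
  | ESuc E' => Suc (fill E' u)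
  | ENrec r a b E' => Nrec r a b (fill E' u)
  end.

Fixpoint liftE_l (k : nat) (E : ectx) : ectx :=
  match E with
  | Hole => Hole
  | EApp E' t => EApp (liftE_l k E') (lift_l k t)
  | ESuc E' => ESuc (liftE_l k E')
  | ENrec r a b E' => ENrec r (lift_l k a) (lift_l k b) (liftE_l k E')
  end.

Fixpoint liftE_m (k : nat) (E : ectx) : ectx :=
  match E with
  | Hole => Hole
  | EApp E' t => EApp (liftE_m k E') (lift_m k t)
  | ESuc E' => ESuc (liftE_m k E')
  | ENrec r a b E' => ENrec r (lift_m k a) (lift_m k b) (liftE_m k E')
  end.

(* structural substitution t[a := a E] (the case beta = alpha used by the
   reduction rules): every command [a]u becomes [a] E[u[a := a E]]. *)
Fixpoint msub (a : nat) (E : ectx) (t : tm) : tm :=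
  match t with
  | Var n => Var n
  | Lam r b => Lam r (msub a (liftE_l 0 E) b)
  | App x y => App (msub a E x) (msub a E y)
  | Mu r be b =>
      let E' := liftE_m 0 E in
      let b' := msub (S a) E' b in
      Mu r be (if be =? S a then fill E' b' else b')
  | Zero => Zero
  | Suc x => Suc (msub a E x)
  | Nrec r x y z => Nrec r (msub a E x) (msub a E y) (msub a E z)
  end.

(* structural substitution on the body command [be]b of a mu whose bound
   variable is mu-variable 0; E lives outside the binder. *)
Definition mu_body_sub (E : ectx) (be : nat) (b : tm) : tm :=
  let E' := liftE_m 0 E in
  let b' := msub 0 E' b in
  if be =? 0 then fill E' b' else b'.

Fixpoint is_numeral (t : tm) : bool :=
  match t with
  | Zero => true
  | Suc t' => is_numeral t'
  | _ => false
  end.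

Definition cod (r : ty) : ty :=
  match r with TArr _ t => t | TNat => TNat end.

Inductive stepA : tm -> tm -> Prop :=
| st_beta r b u : stepA (App (Lam r b) u) (subst_l 0 u b)
| st_suc_mu r be b :
    stepA (Suc (Mu r be b)) (Mu TNat be (mu_body_sub (ESuc Hole) be b))
| st_app_mu r be b s :
    stepA (App (Mu r be b) s) (Mu (cod r) be (mu_body_sub (EApp Hole s) be b))
| st_nrec_zero r a b : stepA (Nrec r a b Zero) a
| st_nrec_suc r a b n :
    is_numeral n = true ->
    stepA (Nrec r a b (Suc n)) (App (App b n) (Nrec r a b n))
| st_nrec_mu r a b r' be c :
    stepA (Nrec r a b (Mu r' be c))
          (Mu r be (mu_body_sub (ENrec r a b Hole) be c))
| st_lam r b b' : stepA b b' -> stepA (Lam r b) (Lam r b')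
| st_app1 a a' b : stepA a a' -> stepA (App a b) (App a' b)
| st_app2 a b b' : stepA b b' -> stepA (App a b) (App a b')
| st_mu r be b b' : stepA b b' -> stepA (Mu r be b) (Mu r be b')
| st_suc a a' : stepA a a' -> stepA (Suc a) (Suc a')
| st_nrec1 r a a' b c : stepA a a' -> stepA (Nrec r a b c) (Nrec r a' b c)
| st_nrec2 r a b b' c : stepA b b' -> stepA (Nrec r a b c) (Nrec r a b' c)
| st_nrec3 r a b c c' : stepA c c' -> stepA (Nrec r a b c) (Nrec r a b c').

Inductive SN_A : tm -> Prop :=
| SN_A_intro t : (forall t', stepA t t' -> SN_A t') -> SN_A t.

(* typing Gamma; Delta |- t : rho  (contexts are lists, index 0 = innermost) *)
Inductive has_type : list ty -> list ty -> tm -> ty -> Prop :=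
| T_var G D n r : nth_error G n = Some r -> has_type G D (Var n) r
| T_lam G D s b t : has_type (s :: G) D b t -> has_type G D (Lam s b) (TArr s t)
| T_app G D a b s t :
    has_type G D a (TArr s t) -> has_type G D b s -> has_type G D (App a b) t
| T_zero G D : has_type G D Zero TNat
| T_suc G D a : has_type G D a TNat -> has_type G D (Suc a) TNat
| T_nrec G D r a b c :
    has_type G D a r -> has_type G D b (TArr TNat (TArr r r)) ->
    has_type G D c TNat -> has_type G D (Nrec r a b c) r
| T_mu G D r be b s :            (* activate + passivate *)
    has_type G (r :: D) b s -> nth_error (r :: D) be = Some s ->
    has_type G D (Mu r be b) r.

(* Main.v *)
Require Import Defs.
From Stdlib Require Import Arith List Lia FunctionalExtensionality.

Ltac ncase := repeat match goal with
 | |- context [?a <? ?b] => destruct (Nat.ltb_spec a b)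
 | |- context [?a =? ?b] => destruct (Nat.eqb_spec a b)
 | |- context [?a <=? ?b] => destruct (Nat.leb_spec a b)
 end.
Ltac vs := do 4 (cbn [lift_l lift_m subst_l]; ncase); try (f_equal; lia); try lia; try reflexivity.

Fixpoint substE (k : nat) (u : tm) (E : ectx) : ectx :=
  match E with
  | Hole => Hole
  | EApp E' t => EApp (substE k u E') (subst_l k u t)
  | ESuc E' => ESuc (substE k u E')
  | ENrec r a b E' => ENrec r (subst_l k u a) (subst_l k u b) (substE k u E')
  end.

Fixpoint msubE (x : nat) (F : ectx) (E : ectx) : ectx :=
  match E with
  | Hole => Hole
  | EApp E' t => EApp (msubE x F E') (msub x F t)
  | ESuc E' => ESuc (msubE x F E')
  | ENrec r a b E' => ENrec r (msub x F a) (msub x F b) (msubE x F E')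
  end.

Fixpoint comp (E F : ectx) : ectx :=
  match E with
  | Hole => F
  | EApp E' t => EApp (comp E' F) t
  | ESuc E' => ESuc (comp E' F)
  | ENrec r a b E' => ENrec r a b (comp E' F)
  end.

Lemma fill_comp E F t : fill (comp E F) t = fill E (fill F t).
Proof. induction E; simpl; congruence. Qed.
Lemma comp_Hole E : comp E Hole = E.
Proof. induction E; simpl; congruence. Qed.

Lemma LLl v : forall i j, i <= j -> lift_l (S j) (lift_l i v) = lift_l i (lift_l j v).
Proof. induction v; intros i j H; simpl; try (f_equal; auto; fail).
 - f_equal; ncase; lia.
 - f_equal; apply IHv; lia. Qed.

Lemma LLm v : forall i j, i <= j -> lift_m (S j) (lift_m i v) = lift_m i (lift_m j v).
Proof. induction v; intros i j H; simpl; try (f_equal; auto; fail).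
 - f_equal. ncase; lia. apply IHv; lia. Qed.

Lemma LM v : forall k j, lift_l k (lift_m j v) = lift_m j (lift_l k v).
Proof. induction v; intros; simpl; f_equal; auto. Qed.

Lemma SL v : forall k u, subst_l k u (lift_l k v) = v.
Proof. induction v; intros; simpl; f_equal; auto.
 vs. Qed.

Ltac llm := first [apply LLm; lia | symmetry; apply LLm; lia].
Ltac lll := first [apply LLl; lia | symmetry; apply LLl; lia].
Ltac lm := first [apply LM | symmetry; apply LM].

Lemma LS b : forall j k u, j <= k -> lift_l k (subst_l j u b) = subst_l j (lift_l k u) (lift_l (S k) b).
Proof. induction b; intros j k u H; simpl; try (f_equal; auto; fail).
 - vs.
 - f_equal. rewrite IHb by lia. f_equal. lll.
 - f_equal. rewrite IHb by lia. f_equal. lm. Qed.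

Lemma LSC v : forall j k u, j <= k -> subst_l (S k) (lift_l j u) (lift_l j v) = lift_l j (subst_l k u v).
Proof. induction v; intros j k u H; simpl; try (f_equal; auto; fail).
 - vs.
 - f_equal. rewrite <- IHv by lia. f_equal. lll.
 - f_equal. rewrite <- IHv by lia. f_equal. lm. Qed.

Lemma MSC v : forall j k u, lift_m j (subst_l k u v) = subst_l k (lift_m j u) (lift_m j v).
Proof. induction v; intros; simpl; try (f_equal; auto; fail).
 - vs.
 - f_equal. rewrite IHv. f_equal. lm.
 - f_equal. rewrite IHv. f_equal. llm. Qed.

Lemma SS b : forall j k u v, j <= k ->
  subst_l k u (subst_l j v b) = subst_l j (subst_l k u v) (subst_l (S k) (lift_l j u) b).
Proof. induction b; intros j k u v H; simpl; try (f_equal; auto; fail).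
 - vs; subst; rewrite SL; auto.
 - f_equal. rewrite IHb by lia. f_equal.
   + apply LSC; lia.
   + f_equal. lll.
 - f_equal. rewrite IHb by lia. f_equal.
   + symmetry; apply MSC.
   + f_equal. lm. Qed.

Lemma lift_l_fill E : forall k t, lift_l k (fill E t) = fill (liftE_l k E) (lift_l k t).
Proof. induction E; intros; simpl; f_equal; auto. Qed.
Lemma lift_m_fill E : forall k t, lift_m k (fill E t) = fill (liftE_m k E) (lift_m k t).
Proof. induction E; intros; simpl; f_equal; auto. Qed.
Lemma subst_fill E : forall k u t, subst_l k u (fill E t) = fill (substE k u E) (subst_l k u t).
Proof. induction E; intros; simpl; f_equal; auto. Qed.
Lemma msub_fill E : forall a F t, msub a F (fill E t) = fill (msubE a F E) (msub a F t).
Proof. induction E; intros; simpl; f_equal; auto. Qed.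

Lemma LLlE E : forall i j, i <= j -> liftE_l (S j) (liftE_l i E) = liftE_l i (liftE_l j E).
Proof. induction E; intros; simpl; f_equal; auto; lll. Qed.
Lemma LLmE E : forall i j, i <= j -> liftE_m (S j) (liftE_m i E) = liftE_m i (liftE_m j E).
Proof. induction E; intros; simpl; f_equal; auto; llm. Qed.
Lemma LME E : forall k j, liftE_l k (liftE_m j E) = liftE_m j (liftE_l k E).
Proof. induction E; intros; simpl; f_equal; auto; lm. Qed.
Lemma SLE E : forall k u, substE k u (liftE_l k E) = E.
Proof. induction E; intros; simpl; f_equal; auto; apply SL. Qed.
Lemma LSCE E : forall j k u, j <= k -> substE (S k) (lift_l j u) (liftE_l j E) = liftE_l j (substE k u E).
Proof. induction E; intros; simpl; f_equal; auto; apply LSC; auto. Qed.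
Lemma MSCE E : forall j k u, liftE_m j (substE k u E) = substE k (lift_m j u) (liftE_m j E).
Proof. induction E; intros; simpl; f_equal; auto; apply MSC. Qed.
Ltac llmE := first [apply LLmE; lia | symmetry; apply LLmE; lia].
Ltac lllE := first [apply LLlE; lia | symmetry; apply LLlE; lia].
Ltac lmE := first [apply LME | symmetry; apply LME].

Lemma liftE_l_comp E F k : liftE_l k (comp E F) = comp (liftE_l k E) (liftE_l k F).
Proof. induction E; simpl; f_equal; auto. Qed.
Lemma liftE_m_comp E F k : liftE_m k (comp E F) = comp (liftE_m k E) (liftE_m k F).
Proof. induction E; simpl; f_equal; auto. Qed.
Lemma substE_comp E F k u : substE k u (comp E F) = comp (substE k u E) (substE k u F).
Proof. induction E; simpl; f_equal; auto. Qed.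
Lemma msubE_comp E F a G : msubE a G (comp E F) = comp (msubE a G E) (msubE a G F).
Proof. induction E; simpl; f_equal; auto. Qed.

Lemma num_lift_l m k : is_numeral m = true -> lift_l k m = m.
Proof. induction m; simpl; intros; try discriminate; f_equal; auto. Qed.
Lemma num_lift_m m k : is_numeral m = true -> lift_m k m = m.
Proof. induction m; simpl; intros; try discriminate; f_equal; auto. Qed.
Lemma num_subst m k u : is_numeral m = true -> subst_l k u m = m.
Proof. induction m; simpl; intros; try discriminate; f_equal; auto. Qed.
Lemma num_msub m a E : is_numeral m = true -> msub a E m = m.
Proof. induction m; simpl; intros; try discriminate; f_equal; auto. Qed.

Lemma ML b : forall j a E, lift_m j (msub a E b) = msub (if a <? j then a else S a) (liftE_m j E) (lift_m j b).
Proof. induction b; intros j a E; cbn [lift_m msub]; try (f_equal; auto; fail).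
 - f_equal. rewrite IHb. f_equal. lmE.
 - f_equal. ncase; rewrite ?lift_m_fill, IHb; ncase; try lia; subst; try reflexivity.
all: rewrite (LLmE E 0 j) by lia; reflexivity. Qed.

Lemma MLE F : forall j a E, liftE_m j (msubE a E F) = msubE (if a <? j then a else S a) (liftE_m j E) (liftE_m j F).
Proof. induction F; intros; simpl; f_equal; auto; apply ML. Qed.

Lemma LMC b : forall k a E, lift_l k (msub a E b) = msub a (liftE_l k E) (lift_l k b).
Proof. induction b; intros k a E; cbn [lift_l msub]; try (f_equal; auto; fail).
 - f_equal. rewrite IHb. f_equal. lllE.
 - f_equal. destruct (n =? S a); rewrite ?lift_l_fill, IHb, LME; reflexivity. Qed.
Lemma LMCE F : forall k a E, liftE_l k (msubE a E F) = msubE a (liftE_l k E) (liftE_l k F).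
Proof. induction F; intros; simpl; f_equal; auto; apply LMC. Qed.

Lemma ML0 v : forall k E, msub k E (lift_m k v) = lift_m k v.
Proof. induction v; intros k E; cbn [lift_m msub]; try (f_equal; auto; fail).
 - f_equal. ncase; try lia; auto. Qed.
Lemma ML0E F : forall k E, msubE k E (liftE_m k F) = liftE_m k F.
Proof. induction F; intros; simpl; f_equal; auto; apply ML0. Qed.

Lemma MS b : forall k a E u, msub a E (subst_l k u b) = subst_l k (msub a E u) (msub a (liftE_l k E) b).
Proof. induction b; intros k a E u; cbn [subst_l msub]; try (f_equal; auto; fail).
 - ncase; reflexivity.
 - f_equal. rewrite IHb. f_equal.
   + symmetry. apply LMC.
   + f_equal. lllE.
 - f_equal. rewrite <- LME.
   destruct (n =? S a); rewrite ?subst_fill, ?SLE, IHb, ML; reflexivity. Qed.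

Lemma SMC b : forall k a u E, subst_l k (lift_m a u) (msub a E b) = msub a (substE k (lift_m a u) E) (subst_l k (lift_m a u) b).
Proof. induction b; intros k a u E; cbn [subst_l msub]; try (f_equal; auto; fail).
 - ncase; try reflexivity. symmetry; apply ML0.
 - f_equal. rewrite LM, IHb, <- LM, LSCE by lia. reflexivity.
 - f_equal. rewrite <- (LLm u 0 a) by lia.
   destruct (n =? S a); rewrite ?subst_fill, IHb, MSCE, <- (LLm u 0 a) by lia; reflexivity. Qed.

Lemma ML0' b a E : lift_m 0 (msub a E b) = msub (S a) (liftE_m 0 E) (lift_m 0 b).
Proof. rewrite ML. reflexivity. Qed.
Lemma MLE0 F a E : liftE_m 0 (msubE a E F) = msubE (S a) (liftE_m 0 E) (liftE_m 0 F).
Proof. rewrite MLE. reflexivity. Qed.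

Lemma MM b : forall a c E0 F, a <> c ->
  msub a (liftE_m c E0) (msub c F b) = msub c (msubE a (liftE_m c E0) F) (msub a (liftE_m c E0) b).
Proof. induction b; intros a c E0 F Hac; cbn [msub msubE]; try (f_equal; auto; fail).
 - f_equal. rewrite LMCE, !LME, IHb by auto. reflexivity.
 - f_equal. rewrite MLE0, <- (LLmE E0 0 c) by lia.
   destruct (Nat.eqb_spec n (S a)); destruct (Nat.eqb_spec n (S c)); try lia;
   rewrite ?msub_fill, ?ML0E, ?IHb by lia; reflexivity. Qed.

Lemma MSAME b : forall a E F0, msub a E (msub a (liftE_m a F0) b) = msub a (comp E (liftE_m a F0)) b.
Proof. induction b; intros a E F0; cbn [msub msubE]; try (f_equal; auto; fail).
 - f_equal. rewrite liftE_l_comp, LME, IHb. reflexivity.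
 - f_equal. rewrite liftE_m_comp, <- (LLmE F0 0 a) by lia.
   destruct (Nat.eqb_spec n (S a)); rewrite ?msub_fill, ?ML0E, IHb, ?fill_comp; reflexivity. Qed.

Lemma MU_COMM a E F be b :
  (if be =? S a then fill (liftE_m 0 E) (msub (S a) (liftE_m 0 E) (mu_body_sub F be b))
   else msub (S a) (liftE_m 0 E) (mu_body_sub F be b)) =
  mu_body_sub (msubE a E F) be
   (if be =? S a then fill (liftE_m 0 E) (msub (S a) (liftE_m 0 E) b) else msub (S a) (liftE_m 0 E) b).
Proof. unfold mu_body_sub. rewrite MLE0.
 destruct (Nat.eqb_spec be 0); destruct (Nat.eqb_spec be (S a)); try lia;
 rewrite ?msub_fill, ?ML0E, ?MM by lia; reflexivity. Qed.

Lemma COMP E2 F be b : mu_body_sub E2 be (mu_body_sub F be b) = mu_body_sub (comp E2 F) be b.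
Proof. unfold mu_body_sub. rewrite liftE_m_comp.
 destruct (be =? 0); rewrite ?msub_fill, ?ML0E, MSAME, ?fill_comp; reflexivity. Qed.

Lemma SUB_MU k u F be b : subst_l k (lift_m 0 u) (mu_body_sub F be b) = mu_body_sub (substE k u F) be (subst_l k (lift_m 0 u) b).
Proof. unfold mu_body_sub. rewrite MSCE.
 destruct (be =? 0); rewrite ?subst_fill, SMC; reflexivity. Qed.

Lemma LIFTL_MU k F be b : lift_l k (mu_body_sub F be b) = mu_body_sub (liftE_l k F) be (lift_l k b).
Proof. unfold mu_body_sub. rewrite <- LME.
 destruct (be =? 0); rewrite ?lift_l_fill, LMC; reflexivity. Qed.

Lemma LIFTM_MU k F be b : lift_m (S k) (mu_body_sub F be b) = mu_body_sub (liftE_m k F) (if be <? S k then be else S be) (lift_m (S k) b).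
Proof. unfold mu_body_sub. rewrite <- (LLmE F 0 k) by lia.
 ncase; try lia; rewrite ?lift_m_fill, ML; ncase; try lia; reflexivity. Qed.

Inductive star : tm -> tm -> Prop :=
| star_refl x : star x x
| star_step x y z : stepA x y -> star y z -> star x z.

Lemma star_trans x y z : star x y -> star y z -> star x z.
Proof. induction 1; intros; auto. econstructor; eauto. Qed.
Lemma star_one x y : stepA x y -> star x y.
Proof. intros; econstructor; eauto; constructor. Qed.
Lemma star_map (f : tm -> tm) : (forall x y, stepA x y -> stepA (f x) (f y)) ->
  forall x y, star x y -> star (f x) (f y).
Proof. intros Hf x y H; induction H; [constructor | econstructor; eauto]. Qed.

Lemma star_App a a' b b' : star a a' -> star b b' -> star (App a b) (App a' b').
Proof. intros H1 H2. apply star_trans with (App a' b).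
 - apply (star_map (fun x => App x b)); auto. intros; constructor; auto.
 - apply (star_map (fun x => App a' x)); auto. intros; constructor; auto. Qed.
Lemma star_Lam r b b' : star b b' -> star (Lam r b) (Lam r b').
Proof. apply (star_map (fun x => Lam r x)). intros; constructor; auto. Qed.
Lemma star_Mu r be b b' : star b b' -> star (Mu r be b) (Mu r be b').
Proof. apply (star_map (fun x => Mu r be x)). intros; constructor; auto. Qed.
Lemma star_Suc b b' : star b b' -> star (Suc b) (Suc b').
Proof. apply (star_map (fun x => Suc x)). intros; constructor; auto. Qed.
Lemma star_Nrec r a a' b b' c c' : star a a' -> star b b' -> star c c' -> star (Nrec r a b c) (Nrec r a' b' c').
Proof. intros H1 H2 H3. apply star_trans with (Nrec r a' b c); [|apply star_trans with (Nrec r a' b' c)].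
 - apply (star_map (fun x => Nrec r x b c)); auto. intros; constructor; auto.
 - apply (star_map (fun x => Nrec r a' x c)); auto. intros; constructor; auto.
 - apply (star_map (fun x => Nrec r a' b' x)); auto. intros; constructor; auto. Qed.

Lemma step_fill E t t' : stepA t t' -> stepA (fill E t) (fill E t').
Proof. induction E; simpl; intros; auto; constructor; auto. Qed.
Lemma star_fill E t t' : star t t' -> star (fill E t) (fill E t').
Proof. apply star_map. intros; apply step_fill; auto. Qed.

Inductive stepE : ectx -> ectx -> Prop :=
| sE_app1 E E' t : stepE E E' -> stepE (EApp E t) (EApp E' t)
| sE_app2 E t t' : stepA t t' -> stepE (EApp E t) (EApp E t')
| sE_suc E E' : stepE E E' -> stepE (ESuc E) (ESuc E')
| sE_nrec1 r a a' b E : stepA a a' -> stepE (ENrec r a b E) (ENrec r a' b E)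
| sE_nrec2 r a b b' E : stepA b b' -> stepE (ENrec r a b E) (ENrec r a b' E)
| sE_nrec3 r a b E E' : stepE E E' -> stepE (ENrec r a b E) (ENrec r a b E').

Lemma stepE_fill E E' t : stepE E E' -> stepA (fill E t) (fill E' t).
Proof. induction 1; simpl; constructor; auto. Qed.

Lemma L1 b b' : stepA b b' -> forall k, stepA (lift_l k b) (lift_l k b').
Proof. induction 1; intros k; cbn [lift_l].
 1: rewrite LS by lia. constructor.
 1: rewrite LIFTL_MU. apply st_suc_mu.
 1: rewrite LIFTL_MU. apply st_app_mu.
 1: constructor.
 1: rewrite (num_lift_l n k) by auto. apply st_nrec_suc; auto.
 1: rewrite LIFTL_MU. apply st_nrec_mu.
 all: constructor; auto. Qed.

Lemma L2 b b' : stepA b b' -> forall k, stepA (lift_m k b) (lift_m k b').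
Proof. induction 1; intros k; cbn [lift_m].
 1: rewrite MSC. constructor.
 1: rewrite LIFTM_MU. apply st_suc_mu.
 1: rewrite LIFTM_MU. apply st_app_mu.
 1: constructor.
 1: rewrite (num_lift_m n k) by auto. apply st_nrec_suc; auto.
 1: rewrite LIFTM_MU. apply st_nrec_mu.
 all: constructor; auto. Qed.

Lemma S1 b b' : stepA b b' -> forall k u, stepA (subst_l k u b) (subst_l k u b').
Proof. induction 1; intros k u0; cbn [subst_l].
 1: rewrite SS by lia. constructor.
 1: rewrite SUB_MU. apply st_suc_mu.
 1: rewrite SUB_MU. apply st_app_mu.
 1: constructor.
 1: rewrite (num_subst n k u0) by auto. apply st_nrec_suc; auto.
 1: rewrite SUB_MU. apply st_nrec_mu.
 all: constructor; auto. Qed.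

Lemma S3 b b' : stepA b b' -> forall a E, stepA (msub a E b) (msub a E b').
Proof. induction 1; intros a0 E0; cbn [msub].
 1: rewrite MS. constructor.
 1: rewrite MU_COMM. apply st_suc_mu.
 1: rewrite MU_COMM. apply st_app_mu.
 1: constructor.
 1: rewrite (num_msub n a0 E0) by auto. apply st_nrec_suc; auto.
 1: rewrite MU_COMM. apply st_nrec_mu.
 all: try (constructor; auto; fail).
 destruct (be =? S a0); constructor; try apply step_fill; auto. Qed.

Lemma L1E E E' : stepE E E' -> forall k, stepE (liftE_l k E) (liftE_l k E').
Proof. induction 1; intros; simpl; constructor; auto; apply L1; auto. Qed.
Lemma L2E E E' : stepE E E' -> forall k, stepE (liftE_m k E) (liftE_m k E').
Proof. induction 1; intros; simpl; constructor; auto; apply L2; auto. Qed.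

Lemma S2 u u' : stepA u u' -> forall b k, star (subst_l k u b) (subst_l k u' b).
Proof. intros H b; revert u u' H; induction b; intros u u' H k; cbn [subst_l].
 - ncase; try constructor. apply star_one; auto.
 - apply star_Lam. apply IHb. apply L1; auto.
 - apply star_App; auto.
 - apply star_Mu. apply IHb. apply L2; auto.
 - constructor.
 - apply star_Suc; auto.
 - apply star_Nrec; auto. Qed.

Lemma S4 E1 E2 : stepE E1 E2 -> forall b a, star (msub a E1 b) (msub a E2 b).
Proof. intros H b; revert E1 E2 H; induction b; intros E1 E2 H a; cbn [msub].
 - constructor.
 - apply star_Lam. apply IHb. apply L1E; auto.
 - apply star_App; auto.
 - apply star_Mu. destruct (n =? S a).
   + eapply star_trans. apply star_fill. apply IHb. apply L2E; eauto.
     apply star_one. apply stepE_fill. apply L2E; auto.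
   + apply IHb. apply L2E; auto.
 - constructor.
 - apply star_Suc; auto.
 - apply star_Nrec; auto. Qed.

Lemma SN_step x y : SN_A x -> stepA x y -> SN_A y.
Proof. intros H; destruct H; auto. Qed.
Lemma SN_star x y : star x y -> SN_A x -> SN_A y.
Proof. induction 1; intros; auto. apply IHstar. eapply SN_step; eauto. Qed.

Definition plus x y := exists z, stepA x z /\ star z y.
Lemma plus_one x y : stepA x y -> plus x y.
Proof. intros; exists y; split; auto; constructor. Qed.
Lemma star_plus x y : star x y -> x = y \/ plus x y.
Proof. destruct 1; auto. right; exists y; auto. Qed.

Lemma SN_plus_ind (P : tm -> Prop) :
  (forall x, SN_A x -> (forall y, plus x y -> P y) -> P x) -> forall x, SN_A x -> P x.
Proof. intros HP x Hx.
 assert (H : P x /\ forall y, plus x y -> P y).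
 { induction Hx as [x Hx IH]. split.
   - apply HP. constructor; auto. intros y [z [Hz Hzy]].
     destruct (star_plus _ _ Hzy) as [<-|Hp]. apply (proj1 (IH z Hz)). apply (proj2 (IH z Hz)); auto.
   - intros y [z [Hz Hzy]]. destruct (star_plus _ _ Hzy) as [<-|Hp]. apply (proj1 (IH z Hz)). apply (proj2 (IH z Hz)); auto. }
 apply (proj1 H). Qed.

Lemma SN_fill_inv E t : SN_A (fill E t) -> SN_A t.
Proof. intros H. remember (fill E t) as x. revert t Heqx. induction H; intros; subst.
 constructor. intros. eapply H0; eauto. apply step_fill; auto. Qed.

Lemma SN_subst_inv k u b : SN_A (subst_l k u b) -> SN_A b.
Proof. intros H. remember (subst_l k u b) as x. revert b Heqx. induction H; intros; subst.
 constructor. intros. eapply H0; eauto. apply S1; auto. Qed.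

Lemma SN_Lam r b : SN_A b -> SN_A (Lam r b).
Proof. induction 1. constructor. intros y Hy. inversion Hy; subst. auto. Qed.

Lemma num_nostep m : is_numeral m = true -> forall t, stepA m t -> False.
Proof. induction m; simpl; intros Hm t0 Ht; try discriminate; inversion Ht; subst; eauto.
 simpl in Hm; discriminate. Qed.
Lemma SN_num m : is_numeral m = true -> SN_A m.
Proof. intros. constructor. intros. exfalso; eapply num_nostep; eauto. Qed.

Lemma fill_Lam E X r b : Lam r b = fill E X -> E = Hole /\ X = Lam r b.
Proof. destruct E; simpl; intros; try discriminate; auto. Qed.
Lemma fill_Mu E X r be b : Mu r be b = fill E X -> E = Hole /\ X = Mu r be b.
Proof. destruct E; simpl; intros; try discriminate; auto. Qed.
Lemma fill_Zero E X : Zero = fill E X -> E = Hole /\ X = Zero.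
Proof. destruct E; simpl; intros; try discriminate; auto. Qed.
Lemma num_fill E X : is_numeral (fill E X) = true -> is_numeral X = true.
Proof. induction E; simpl; intros; auto; discriminate. Qed.

Definition neutral (X : tm) : Prop :=
  match X with Lam _ _ => False | Mu _ _ _ => False | _ => is_numeral X = false end.

Lemma NEUTINV E X T : neutral X -> stepA (fill E X) T ->
  (exists E', stepE E E' /\ T = fill E' X) \/ (exists X', stepA X X' /\ T = fill E X').
Proof. revert T; induction E; intros T HX HT; simpl in HT.
 - right. eauto.
 - inversion HT; subst.
   + apply fill_Lam in H0. destruct H0; subst. contradiction.
   + apply fill_Mu in H0. destruct H0; subst. contradiction.
   + destruct (IHE _ HX H2) as [[E' [H1 ->]]|[X' [H1 ->]]]; [left|right]; eexists; split; eauto; constructor; auto.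
   + left. eexists; split. apply sE_app2; eauto. reflexivity.
 - inversion HT; subst.
   + apply fill_Mu in H0. destruct H0; subst. contradiction.
   + destruct (IHE _ HX H0) as [[E' [H1 ->]]|[X' [H1 ->]]]; [left|right]; eexists; split; eauto; constructor; auto.
 - inversion HT; subst.
   + apply fill_Zero in H3. destruct H3; subst. simpl in HX. discriminate.
   + assert (is_numeral (fill E X) = true) by (rewrite <- H3; auto).
     apply num_fill in H. destruct X; simpl in HX, H; try contradiction; congruence.
   + apply fill_Mu in H3. destruct H3; subst. contradiction.
   + left. eexists; split. apply sE_nrec1; eauto. reflexivity.
   + left. eexists; split. apply sE_nrec2; eauto. reflexivity.
   + destruct (IHE _ HX H4) as [[E' [H1 ->]]|[X' [H1 ->]]]; [left|right]; eexists; split; eauto; constructor; auto.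
Qed.

Fixpoint esize (E : ectx) : nat :=
  match E with Hole => 0 | EApp E _ => S (esize E) | ESuc E => S (esize E) | ENrec _ _ _ E => S (esize E) end.
Lemma stepE_esize E E' : stepE E E' -> esize E' = esize E.
Proof. induction 1; simpl; auto. Qed.

Lemma MUINV E r be b T : stepA (fill E (Mu r be b)) T ->
  (exists E', stepE E E' /\ T = fill E' (Mu r be b)) \/
  (exists b', stepA b b' /\ T = fill E (Mu r be b')) \/
  (exists E2 F r', E = comp E2 F /\ esize E2 < esize E /\ T = fill E2 (Mu r' be (mu_body_sub F be b))).
Proof. revert T; induction E; intros T HT; simpl in HT.
 - inversion HT; subst. right; left. eauto.
 - inversion HT; subst.
   + apply fill_Lam in H0. destruct H0 as [_ H0]. discriminate.
   + apply fill_Mu in H0. destruct H0 as [-> H0]. injection H0; intros; subst.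
     right; right. exists Hole. do 2 eexists. split; [reflexivity|]. split; [simpl; lia|reflexivity].
   + destruct (IHE _ H2) as [[E' [H1 ->]]|[[b' [H1 ->]]|[E2 [F [r' [-> [Hs ->]]]]]]].
     * left. eexists; split; [constructor; eauto | reflexivity].
     * right; left. eexists; split; eauto.
     * right; right. eexists (EApp E2 _), F, r'. simpl. split; [reflexivity|]. split; [lia|reflexivity].
   + left. eexists; split; [apply sE_app2; eauto | reflexivity].
 - inversion HT; subst.
   + apply fill_Mu in H0. destruct H0 as [-> H0]. injection H0; intros; subst.
     right; right. exists Hole. do 2 eexists. split; [reflexivity|]. split; [simpl; lia|reflexivity].
   + destruct (IHE _ H0) as [[E' [H1 ->]]|[[b' [H1 ->]]|[E2 [F [r' [-> [Hs ->]]]]]]].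
     * left. eexists; split; [constructor; eauto | reflexivity].
     * right; left. eexists; split; eauto.
     * right; right. eexists (ESuc E2), F, r'. simpl. split; [reflexivity|]. split; [lia|reflexivity].
 - inversion HT; subst.
   + apply fill_Zero in H3. destruct H3 as [_ H3]. discriminate.
   + assert (is_numeral (fill E (Mu r be b)) = true) by (rewrite <- H3; auto).
     apply num_fill in H. discriminate.
   + apply fill_Mu in H3. destruct H3 as [-> H3]. injection H3; intros; subst.
     right; right. exists Hole. do 2 eexists. split; [reflexivity|]. split; [simpl; lia|reflexivity].
   + left. eexists; split; [apply sE_nrec1; eauto | reflexivity].
   + left. eexists; split; [apply sE_nrec2; eauto | reflexivity].
   + destruct (IHE _ H4) as [[E' [H1 ->]]|[[b' [H1 ->]]|[E2 [F [r' [-> [Hs ->]]]]]]].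
     * left. eexists; split; [constructor; eauto | reflexivity].
     * right; left. eexists; split; eauto.
     * right; right. eexists (ENrec _ _ _ E2), F, r'. simpl. split; [reflexivity|]. split; [lia|reflexivity].
Qed.

Lemma C1 E t : SN_A (fill E t) -> forall n, SN_A (fill E (Var n)).
Proof. intros H. remember (fill E t) as x. revert E Heqx. induction H as [x Hx IH].
 intros E -> n. constructor. intros T HT.
 destruct (NEUTINV E (Var n) T eq_refl HT) as [[E' [Hs ->]]|[X' [Hs ->]]].
 - apply (IH (fill E' t)); auto. apply stepE_fill; auto.
 - inversion Hs. Qed.

Lemma C3 E u : SN_A (fill E (Var 0)) -> SN_A u -> SN_A (fill E (App (Var 0) u)).
Proof. intros H. revert u. remember (fill E (Var 0)) as x. revert E Heqx. induction H as [x Hx IH].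
 intros E -> u Hu. induction Hu as [u Hu IHu]. constructor. intros T HT.
 destruct (NEUTINV E (App (Var 0) u) T eq_refl HT) as [[E' [Hs ->]]|[X' [Hs ->]]].
 - apply (IH (fill E' (Var 0))); auto. apply stepE_fill; auto. constructor; auto.
 - inversion Hs; subst; [inversion H2 | apply IHu; auto]. Qed.

Ltac splus := let Y := fresh "Y" in let H := fresh "HY" in intros Y H; pattern Y; revert Y H; apply SN_plus_ind.

Lemma BETA r : forall Y, SN_A Y -> forall E b u, Y = fill E (subst_l 0 u b) -> SN_A u -> SN_A (fill E (App (Lam r b) u)).
Proof. splus. intros Y HY IH E b u HeqY Hu. revert HeqY. induction Hu as [u Hu IHu]. intros HeqY.
 constructor. intros T HT.
 destruct (NEUTINV E (App (Lam r b) u) T eq_refl HT) as [[E' [Hs ->]]|[X' [Hs ->]]].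
 - apply (IH (fill E' (subst_l 0 u b))); auto. subst; apply plus_one; apply stepE_fill; auto. constructor; auto.
 - inversion Hs; subst.
   + auto.
   + inversion H2; subst. apply (IH (fill E (subst_l 0 u b'))); auto. apply plus_one; apply step_fill; apply S1; auto.
     constructor; auto.
   + destruct (star_plus _ _ (star_fill E _ _ (S2 _ _ H2 b 0))) as [Heq|Hp].
     * apply IHu; auto.
     * apply (IH _ Hp); auto.
Qed.

Lemma NREC0 r E a b : SN_A (fill E a) -> SN_A b -> SN_A (fill E (Nrec r a b Zero)).
Proof. intros H. revert b. remember (fill E a) as x. revert E a Heqx. induction H as [x Hx IH].
 intros E a -> b Hb. induction Hb as [b Hb IHb]. constructor. intros T HT.
 destruct (NEUTINV E (Nrec r a b Zero) T eq_refl HT) as [[E' [Hs ->]]|[X' [Hs ->]]].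
 - apply (IH (fill E' a)); auto. apply stepE_fill; auto. constructor; auto.
 - inversion Hs; subst.
   + constructor; auto.
   + apply (IH (fill E a')); auto. apply step_fill; auto. constructor; auto.
   + apply IHb; auto.
   + inversion H4. Qed.

Lemma NRECS r m : is_numeral m = true -> forall Y, SN_A Y -> forall E a b, Y = fill E (App (App b m) (Nrec r a b m)) ->
  SN_A (fill E (Nrec r a b (Suc m))).
Proof. intros Hm. splus. intros Y HY IH E a b HeqY. subst Y.
 constructor. intros T HT.
 destruct (NEUTINV E (Nrec r a b (Suc m)) T eq_refl HT) as [[E' [Hs ->]]|[X' [Hs ->]]].
 - apply (IH (fill E' (App (App b m) (Nrec r a b m)))); auto. apply plus_one; apply stepE_fill; auto.
 - inversion Hs; subst.
   + auto.
   + apply (IH (fill E (App (App b m) (Nrec r a' b m)))); auto.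
     apply plus_one; apply step_fill. apply st_app2. apply st_nrec1; auto.
   + apply (IH (fill E (App (App b' m) (Nrec r a b' m)))); auto.
     exists (fill E (App (App b' m) (Nrec r a b m))). split.
     * apply step_fill. apply st_app1. apply st_app1. auto.
     * apply star_one. apply step_fill. apply st_app2. apply st_nrec2; auto.
   + inversion H4; subst.
     * simpl in Hm; discriminate.
     * exfalso; eapply num_nostep; eauto.
Qed.

Lemma MBS3 E be b b' : stepA b b' -> stepA (mu_body_sub E be b) (mu_body_sub E be b').
Proof. intros H. unfold mu_body_sub. destruct (be =? 0); [apply step_fill|]; apply S3; auto. Qed.

Lemma MBS4 E E' be b : stepE E E' -> star (mu_body_sub E be b) (mu_body_sub E' be b).
Proof. intros H. unfold mu_body_sub. pose proof (L2E _ _ H 0) as H'. destruct (be =? 0).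
 - eapply star_trans. apply star_fill. apply S4; eauto. apply star_one. apply stepE_fill; auto.
 - apply S4; auto. Qed.

Lemma KEY be : forall n E, esize E < n -> forall r b, SN_A (mu_body_sub E be b) -> SN_A (fill E (Var 0)) ->
  SN_A (fill E (Mu r be b)).
Proof. induction n as [|n IHn]; intros E HE r b HX HV; [lia|].
 revert E HE r b HV HX.
 cut (forall X, SN_A X -> forall E, esize E < S n -> forall r b, SN_A (fill E (Var 0)) -> mu_body_sub E be b = X ->
   SN_A (fill E (Mu r be b))).
 { intros H E HE r b HV HX. eapply H; eauto. }
 splus. intros X HX IHX E HE r b HV HeqX.
 remember (fill E (Var 0)) as V. revert E HE HeqV r HeqX. induction HV as [V HV IHV].
 intros E HE -> r HeqX. constructor. intros T HT.
 destruct (MUINV E r be b T HT) as [[E' [Hs ->]]|[[b' [Hs ->]]|[E2 [F [r' [-> [Hsz ->]]]]]]].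
 - destruct (star_plus _ _ (MBS4 E E' be b Hs)) as [Heq|Hp].
   + apply (IHV (fill E' (Var 0))); auto. apply stepE_fill; auto.
     rewrite (stepE_esize _ _ Hs); auto. congruence.
   + subst X. apply (IHX _ Hp); auto. rewrite (stepE_esize _ _ Hs); auto.
     apply HV. apply stepE_fill; auto.
 - subst X. apply (IHX _ (plus_one _ _ (MBS3 E be b b' Hs))); auto. constructor; auto.
 - apply IHn; [lia| |].
   + rewrite COMP. subst X; auto.
   + rewrite fill_comp in HV. apply (C1 E2 (fill F (Var 0))). constructor; auto.
Qed.

Definition scons {A : Type} (x : A) (f : nat -> A) (n : nat) : A :=
  match n with 0 => x | S m => f m end.
Definition upl (s : nat -> tm) := scons (Var 0) (fun n => lift_l 0 (s n)).
Definition upm (t : nat -> ectx) := scons Hole (fun n => liftE_m 0 (t n)).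

Fixpoint Sub (s : nat -> tm) (t : nat -> ectx) (x : tm) : tm :=
  match x with
  | Var n => s n
  | Lam r b => Lam r (Sub (upl s) (fun n => liftE_l 0 (t n)) b)
  | App a b => App (Sub s t a) (Sub s t b)
  | Mu r be b => Mu r be (fill (upm t be) (Sub (fun n => lift_m 0 (s n)) (upm t) b))
  | Zero => Zero
  | Suc a => Suc (Sub s t a)
  | Nrec r a b c => Nrec r (Sub s t a) (Sub s t b) (Sub s t c)
  end.

Lemma upm_subst k u t : (fun n => substE k (lift_m 0 u) (upm t n)) = upm (fun n => substE k u (t n)).
Proof. extensionality n. destruct n; simpl; auto. rewrite MSCE; auto. Qed.

Lemma FS b : forall s t k u, subst_l k u (Sub s t b) = Sub (fun n => subst_l k u (s n)) (fun n => substE k u (t n)) b.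
Proof. induction b; intros s t0 k u; simpl; f_equal; auto.
 - rewrite IHb. f_equal.
   + extensionality m. destruct m; simpl; auto. apply LSC; lia.
   + extensionality m. apply LSCE; lia.
 - rewrite subst_fill, IHb. f_equal.
   + exact (f_equal (fun f => f n) (upm_subst k u t0)).
   + f_equal; [extensionality m; symmetry; apply MSC | apply upm_subst]. Qed.

Lemma F2 s t u b : subst_l 0 u (Sub (upl s) (fun n => liftE_l 0 (t n)) b) = Sub (scons u s) t b.
Proof. rewrite FS. f_equal.
 - extensionality m. destruct m; simpl; auto. apply SL.
 - extensionality m. apply SLE. Qed.

Definition tauM (a : nat) (E : ectx) (t : nat -> ectx) (n : nat) : ectx :=
  if n =? a then comp E (msubE a E (t n)) else msubE a E (t n).

Lemma upm_msub a E t : (fun n => msubE (S a) (liftE_m 0 E) (upm t n)) = upm (fun n => msubE a E (t n)).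
Proof. extensionality n. destruct n; simpl; auto. rewrite MLE0; auto. Qed.

Lemma upm_tauM a E t : tauM (S a) (liftE_m 0 E) (upm t) = upm (tauM a E t).
Proof. extensionality n. unfold tauM. destruct n; simpl; auto.
 destruct (Nat.eqb_spec n a); subst.
 - rewrite liftE_m_comp, MLE0. auto.
 - rewrite MLE0; auto. Qed.

Lemma FM b : forall s t a E, msub a E (Sub s t b) = Sub (fun n => msub a E (s n)) (tauM a E t) b.
Proof. induction b; intros s t0 a E; simpl; f_equal; auto.
 - rewrite IHb. f_equal.
   + extensionality m. destruct m; simpl; auto. symmetry; apply LMC.
   + extensionality m. unfold tauM. destruct (m =? a); rewrite ?liftE_l_comp, LMCE; auto.
 - rewrite msub_fill, IHb, upm_tauM.
   replace (fun n0 => msub (S a) (liftE_m 0 E) (lift_m 0 (s n0))) with (fun n0 => lift_m 0 (msub a E (s n0)))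
     by (extensionality m; apply ML0').
   assert (H : msubE (S a) (liftE_m 0 E) (upm t0 n) = tauM (S a) (liftE_m 0 E) (upm t0) n \/ n = S a).
   { unfold tauM. destruct (Nat.eqb_spec n (S a)); auto. }
   rewrite upm_tauM in H.
   destruct (Nat.eqb_spec n (S a)).
   + subst n. rewrite <- fill_comp. f_equal. rewrite <- upm_tauM. unfold tauM. rewrite Nat.eqb_refl. auto.
   + destruct H as [H|H]; [|lia]. rewrite H. auto. Qed.

Lemma F1 x : forall j s t t', (forall n, t' (if n <? j then n else S n) = liftE_m j (t n)) ->
  lift_m j (Sub s t x) = Sub (fun n => lift_m j (s n)) t' (lift_m j x).
Proof. induction x; intros j s t0 t' H; simpl; f_equal; auto.
 - rewrite (IHx j (upl s) (fun n => liftE_l 0 (t0 n)) (fun n => liftE_l 0 (t' n))).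
   + f_equal. extensionality m. destruct m; simpl; auto. lm.
   + intros m. rewrite H. lmE.
 - assert (Hup : forall m, upm t' (if m <? S j then m else S m) = liftE_m (S j) (upm t0 m)).
   { intros m. destruct m; simpl; auto. pose proof (H m) as Hm.
     destruct (Nat.ltb_spec m j); ncase; try lia; simpl; rewrite Hm; llmE. }
   rewrite lift_m_fill, (IHx (S j) _ (upm t0) (upm t') Hup). rewrite Hup. f_equal. f_equal.
   extensionality m. llm. Qed.

Lemma Sub_id x : Sub Var (fun _ => Hole) x = x.
Proof. induction x; simpl; f_equal; auto.
 - replace (upl Var) with Var. auto. extensionality m; destruct m; reflexivity.
 - replace (upm (fun _ => Hole)) with (fun _ : nat => Hole).
   + simpl. auto.
   + extensionality m; destruct m; reflexivity. Qed.

Lemma MU_SUB E be s t b :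
  mu_body_sub E be (fill (upm t be) (Sub (fun n => lift_m 0 (s n)) (upm t) b)) =
  fill (scons (liftE_m 0 E) (fun n => liftE_m 0 (t n)) be)
       (Sub (fun n => lift_m 0 (s n)) (scons (liftE_m 0 E) (fun n => liftE_m 0 (t n))) b).
Proof. unfold mu_body_sub. rewrite msub_fill, FM.
 replace (fun n => msub 0 (liftE_m 0 E) (lift_m 0 (s n))) with (fun n => lift_m 0 (s n))
   by (extensionality m; symmetry; apply ML0).
 replace (tauM 0 (liftE_m 0 E) (upm t)) with (scons (liftE_m 0 E) (fun n => liftE_m 0 (t n))).
 - destruct be; simpl.
   + reflexivity.
   + rewrite ML0E. reflexivity.
 - extensionality m. unfold tauM. destruct m; simpl.
   + rewrite comp_Hole. reflexivity.
   + rewrite ML0E. reflexivity. Qed.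

Fixpoint liftm (k : nat) (x : tm) : tm := match k with 0 => x | S k => lift_m 0 (liftm k x) end.
Fixpoint liftEm (k : nat) (E : ectx) : ectx := match k with 0 => E | S k => liftE_m 0 (liftEm k E) end.

Lemma liftm_lift k x : liftm k (lift_m 0 x) = lift_m 0 (liftm k x).
Proof. induction k; simpl; auto; rewrite IHk; reflexivity. Qed.
Lemma liftEm_lift k E : liftEm k (liftE_m 0 E) = liftE_m 0 (liftEm k E).
Proof. induction k; simpl; auto; rewrite IHk; reflexivity. Qed.
Lemma liftm_App k a b : liftm k (App a b) = App (liftm k a) (liftm k b).
Proof. induction k; simpl; auto; rewrite IHk; reflexivity. Qed.
Lemma liftm_Nrec k r a b c : liftm k (Nrec r a b c) = Nrec r (liftm k a) (liftm k b) (liftm k c).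
Proof. induction k; simpl; auto; rewrite IHk; reflexivity. Qed.
Lemma liftm_num k m : is_numeral m = true -> liftm k m = m.
Proof. intros H; induction k; simpl; auto. rewrite IHk. apply num_lift_m; auto. Qed.
Lemma liftm_Var k n : liftm k (Var n) = Var n.
Proof. induction k; simpl; auto; rewrite IHk; reflexivity. Qed.
Lemma liftEm_comp k E F : liftEm k (comp E F) = comp (liftEm k E) (liftEm k F).
Proof. induction k; simpl; auto. rewrite IHk, liftE_m_comp; auto. Qed.
Lemma liftEm_Hole k : liftEm k Hole = Hole.
Proof. induction k; simpl; auto; rewrite IHk; reflexivity. Qed.
Lemma liftEm_ESuc k : liftEm k (ESuc Hole) = ESuc Hole.
Proof. induction k; simpl; auto; rewrite IHk; reflexivity. Qed.
Lemma liftEm_ENrec k r a b : liftEm k (ENrec r a b Hole) = ENrec r (liftm k a) (liftm k b) Hole.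
Proof. induction k; simpl; auto; rewrite IHk; reflexivity. Qed.

Fixpoint Kt (r : ty) : ectx -> Prop :=
  match r with
  | TNat => fun E => forall k m, is_numeral m = true -> SN_A (fill (liftEm k E) m)
  | TArr s t => fun E => E = Hole \/ exists E0 u, E = comp E0 (EApp Hole u) /\ Kt t E0 /\
                 (forall k E', Kt s E' -> SN_A (fill E' (liftm k u)))
  end.
Definition Rt (r : ty) (u : tm) : Prop := forall k E, Kt r E -> SN_A (fill E (liftm k u)).

Lemma Kt_Hole r : Kt r Hole.
Proof. destruct r; simpl; auto. intros k m Hm. rewrite liftEm_Hole. apply SN_num; auto. Qed.

Lemma LK r : forall E, Kt r E -> Kt r (liftE_m 0 E).
Proof. induction r; simpl; intros E H.
 - intros k m Hm. rewrite liftEm_lift. apply (H (S k)); auto.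
 - destruct H as [->|[E0 [u [-> [HK HR]]]]]; [left; reflexivity|].
   right. exists (liftE_m 0 E0), (lift_m 0 u). split; [rewrite liftE_m_comp; reflexivity|]. split; auto.
   intros k E' HE'. rewrite liftm_lift. apply (HR (S k)); auto. Qed.
Lemma LKk r k E : Kt r E -> Kt r (liftEm k E).
Proof. induction k; simpl; auto. intros; apply LK; auto. Qed.
Lemma LR r u : Rt r u -> Rt r (lift_m 0 u).
Proof. intros H k E HE. rewrite liftm_lift. apply (H (S k)); auto. Qed.
Lemma LRk r k u : Rt r u -> Rt r (liftm k u).
Proof. induction k; simpl; auto. intros; apply LR; auto. Qed.
Lemma Rt_SN r u : Rt r u -> SN_A u.
Proof. intros H. apply (H 0 Hole (Kt_Hole r)). Qed.
Lemma Kt_ctx r : forall E, Kt r E -> SN_A (fill E (Var 0)).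
Proof. induction r; simpl; intros E H.
 - apply (C1 E Zero). apply (H 0 Zero); auto.
 - destruct H as [->|[E0 [u [-> [HK HR]]]]].
   + simpl. constructor. intros y Hy; inversion Hy.
   + rewrite fill_comp. simpl. apply C3; auto. apply (Rt_SN r1 u). exact HR. Qed.
Lemma Rt_Var r n : Rt r (Var n).
Proof. intros k E HE. rewrite liftm_Var. apply (C1 E (Var 0)). apply (Kt_ctx r); auto. Qed.

Lemma NREC m : is_numeral m = true -> forall r E a b, Kt r E -> Rt r a -> Rt (TArr TNat (TArr r r)) b ->
  SN_A (fill E (Nrec r a b m)).
Proof. induction m; simpl; intros Hm r E a b HE Ha Hb; try discriminate.
 - apply NREC0. apply (Ha 0 E HE). apply (Rt_SN _ _ Hb).
 - apply (NRECS r m Hm (fill E (App (App b m) (Nrec r a b m)))); auto.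
   replace (fill E (App (App b m) (Nrec r a b m)))
     with (fill (comp (comp E (EApp Hole (Nrec r a b m))) (EApp Hole m)) (liftm 0 b))
     by (rewrite !fill_comp; reflexivity).
   apply Hb. right. exists (comp E (EApp Hole (Nrec r a b m))), m. split; auto. split.
   + right. exists E, (Nrec r a b m). split; auto. split; auto.
     intros k E' HE'. rewrite liftm_Nrec, (liftm_num k m Hm). apply IHm; auto; apply LRk; auto.
   + intros k E' HE'. rewrite (liftm_num k m Hm). apply (HE' 0 m Hm). Qed.

Lemma TW G D x r : has_type G D x r -> forall j D',
  (forall n s, nth_error D n = Some s -> nth_error D' (if n <? j then n else S n) = Some s) ->
  has_type G D' (lift_m j x) r.
Proof. induction 1; intros j D' HD; simpl; try (econstructor; eauto; fail).
 assert (HD' : forall n s0, nth_error (r :: D) n = Some s0 ->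
           nth_error (r :: D') (if n <? S j then n else S n) = Some s0).
 { intros [|n] s0 Hn; simpl in *; auto. pose proof (HD n s0 Hn) as Hm.
   destruct (Nat.ltb_spec n j); ncase; try lia; simpl; auto. }
 econstructor; eauto. Qed.

Fixpoint size (x : tm) : nat :=
  match x with
  | Var _ => 1 | Lam _ b => S (size b) | App a b => S (size a + size b) | Mu _ _ b => S (size b)
  | Zero => 1 | Suc a => S (size a) | Nrec _ a b c => S (size a + size b + size c)
  end.
Lemma size_lift_m x : forall j, size (lift_m j x) = size x.
Proof. induction x; intros; simpl; auto. Qed.
Lemma size_liftm k x : size (liftm k x) = size x.
Proof. induction k; simpl; auto. rewrite size_lift_m; auto. Qed.

Definition redS G s := forall i r, nth_error G i = Some r -> Rt r (s i).
Definition redT D t := forall i r, nth_error D i = Some r -> Kt r (t i).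
Definition CoreP x := forall G D r s t, has_type G D x r -> redS G s -> redT D t ->
  forall E, Kt r E -> SN_A (fill E (Sub s t x)).

Lemma R_of_core x : (forall k, CoreP (liftm k x)) -> forall G D r s t, has_type G D x r -> redS G s -> redT D t ->
  Rt r (Sub s t x).
Proof. intros Hc G D r s t Hty HS HT k E HE.
 assert (H : forall k, exists s' t' D', liftm k (Sub s t x) = Sub s' t' (liftm k x) /\
               has_type G D' (liftm k x) r /\ redS G s' /\ redT D' t').
 { induction k0.
   - exists s, t, D. auto.
   - destruct IHk0 as [s' [t' [D' [Heq [Ht [Hs Ht']]]]]].
     exists (fun n => lift_m 0 (s' n)), (upm t'), (TNat :: D'). simpl. rewrite Heq. split; [|split; [|split]].
     + apply F1. intros n. reflexivity.
     + apply TW with (D := D'); auto.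
     + intros i r' Hi. apply LR. apply Hs; auto.
     + intros [|i] r' Hi; simpl in *.
       * inversion Hi; subst. apply Kt_Hole.
       * apply LK. apply Ht'; auto. }
 destruct (H k) as [s' [t' [D' [Heq [Ht [Hs Ht']]]]]]. rewrite Heq. apply (Hc k G D' r s' t'); auto. Qed.

Lemma ADEQ n : forall x, size x < n -> CoreP x.
Proof. induction n as [|n IHn]; intros x Hx; [lia|].
 assert (IHR : forall y, size y < n -> forall G D r s t, has_type G D y r -> redS G s -> redT D t -> Rt r (Sub s t y)).
 { intros y Hy. apply R_of_core. intros k. apply IHn. rewrite size_liftm; auto. }
 intros G D r s t Hty HS HT E HE.
 destruct x; simpl in Hx; inversion Hty; subst; simpl.
 - match goal with H: nth_error G _ = Some _ |- _ => apply (HS _ _ H 0 E HE) end.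
 -
   destruct HE as [->|[E0 [u [-> [HK HR]]]]].
   + simpl. apply SN_Lam. apply (SN_subst_inv 0 (Var 0)). rewrite F2.
     change (SN_A (fill Hole (Sub (scons (Var 0) s) t x))). apply (IHn x ltac:(lia) (t0 :: G) D t1 (scons (Var 0) s) t); auto.
     * intros [|i] r' Hi; simpl in Hi; [inversion Hi; subst; apply Rt_Var | apply HS; auto].
     * apply Kt_Hole.
   + rewrite fill_comp. simpl.
     apply (BETA t0 (fill E0 (subst_l 0 u (Sub (upl s) (fun n => liftE_l 0 (t n)) x)))); auto.
     * rewrite F2. apply (IHn x ltac:(lia) (t0 :: G) D t1 (scons u s) t); auto.
       intros [|i] r' Hi; simpl in Hi; [inversion Hi; subst; exact HR | apply HS; auto].
     * apply (Rt_SN _ _ HR).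
 -
   replace (fill E (App (Sub s t x1) (Sub s t x2))) with (fill (comp E (EApp Hole (Sub s t x2))) (Sub s t x1))
     by (rewrite fill_comp; reflexivity).
   apply (IHn x1 ltac:(lia) G D (TArr s0 r) s t); auto.
   right. exists E, (Sub s t x2). split; auto. split; auto.
   apply (IHR x2 ltac:(lia) G D s0 s t); auto.
 -
   apply (KEY n0 (S (esize E))); [lia| |apply (Kt_ctx r); auto].
   rewrite MU_SUB.
   assert (HT' : redT (r :: D) (scons (liftE_m 0 E) (fun n => liftE_m 0 (t n)))).
   { intros [|i] r' Hi; simpl in *; [inversion Hi; subst; apply LK; auto | apply LK; apply HT; auto]. }
   apply (IHn x ltac:(lia) G (r :: D) s0 (fun n => lift_m 0 (s n))); auto.
   + intros i r' Hi. apply LR. apply HS; auto.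
 -
   apply (HE 0 Zero); auto.
 -
   replace (fill E (Suc (Sub s t x))) with (fill (comp E (ESuc Hole)) (Sub s t x))
     by (rewrite fill_comp; reflexivity).
   apply (IHn x ltac:(lia) G D TNat s t); auto.
   intros k m Hm. rewrite liftEm_comp, fill_comp, liftEm_ESuc. simpl. apply HE. simpl; auto.
 -
   replace (fill E (Nrec r (Sub s t x1) (Sub s t x2) (Sub s t x3)))
     with (fill (comp E (ENrec r (Sub s t x1) (Sub s t x2) Hole)) (Sub s t x3))
     by (rewrite fill_comp; reflexivity).
   apply (IHn x3 ltac:(lia) G D TNat s t); auto.
   intros k m Hm. rewrite liftEm_comp, fill_comp, liftEm_ENrec. simpl.
   apply NREC; auto.
   + apply LKk; auto.
   + apply LRk. apply (IHR x1 ltac:(lia) G D r s t); auto.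
   + apply LRk. apply (IHR x2 ltac:(lia) G D _ s t); auto.
Qed.

Theorem mainTheorem14 :
  forall (G D : list ty) (t : tm) (r : ty), has_type G D t r -> SN_A t.
Proof.
  intros G D t r H. apply (Rt_SN r). rewrite <- (Sub_id t).
  refine (R_of_core t _ G D r Var (fun _ => Hole) H _ _).
  - intros k. apply (ADEQ (S (size (liftm k t)))). lia.
  - intros i r' Hi. apply Rt_Var.
  - intros i r' Hi. apply Kt_Hole.
Qed.
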